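(* Let $S$ be an additively reduced semidomain and $G$ a torsion-free abelian group. Let $f=\sum_{i=0}^\infty s_ix^{g_i}\in S[\![G]\!]$ with $|\operatorname{supp}(f)|>1$. Then $f$ is irreducible if and only if $f$ is monolithic and $1\in\gcd(\{s_i : i\in\mathbb{N}_0\})$.
   Context: A semidomain is a subsemiring (containing $0$ and $1$) of an integral domain; $S^\times$ is the unit group of the multiplicative monoid $S\setminus\{0\}$. $S$ is additively reduced if $0$ is the only invertible element of $(S,+)$. $G$ carries a fixed total order compatible with addition. $S[\![G]\!]=\{\sum_{i=0}^\infty s_ix^{g_i} : s_i\in S,\ g_i\in G,\ g_i<g_{i+1}\}$ with operations defined as for polynomials; elements are written so that $s_i=0$ implies $s_{i+1}=0$; $\operatorname{supp}(f)=\{g_i: s_i\neq0\}$. $f$ is irreducible if it is nonzero, a nonunit of $S[\![G]\!]$, and $f=pq$ implies $p$ or $q$ is a unit. A nonzero $f$ is monolithic if $f=pq$ with $p,q\in S[\![G]\!]$ implies one of $p,q$ is a monomial $sx^g$. For a set $B$ of elements of $S$, $1\in\gcd(B)$ means $1$ is a greatest common divisor of the nonzero elements of $B$ in the multiplicative monoid $S\setminus\{0\}$, i.e. every common divisor of them is a unit of $S$. *)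

(* Defs.v *)
From HB Require Import structures.
From mathcomp Require Import all_boot all_algebra.
Set Implicit Arguments. Unset Strict Implicit. Unset Printing Implicit Defensive.
Import GRing.Theory.
Local Open Scope ring_scope.

(* A semidomain S is represented as a subset S of an integral domain R
   containing 0 and 1 and closed under + and * (hypotheses of the theorem).
   The group G is a zmodType with a strict total order [lt] compatible with +.
   An element of S[[G]] is represented by its coefficient function G -> R. *)

(* c : G -> R is an element of S[[G]]: coefficients in S and
   c = sum_i s_i x^{g_i} with s_i = c (g i), g_i < g_{i+1} (along the nonzero
   prefix), s_i = 0 -> s_{i+1} = 0, and every support point is some g_i. *)
Definition is_series (R : idomainType) (G : zmodType) (S : {pred R})
    (lt : rel G) (c : G -> R) : Prop :=
  (forall x, c x \in S) /\
  exists g : nat -> G,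
    (forall i, c (g i.+1) != 0 -> c (g i) != 0 /\ lt (g i) (g i.+1)) /\
    (forall x, c x != 0 -> exists i, g i = x).

Definition conv_at (R : idomainType) (G : zmodType) (p q : G -> R) (x : G)
    (v : R) : Prop :=
  exists s : seq G, uniq s /\ (forall a, p a * q (x - a) != 0 -> a \in s) /\
    v = \sum_(a <- s) p a * q (x - a).

Definition is_prod (R : idomainType) (G : zmodType) (p q r : G -> R) : Prop :=
  forall x, conv_at p q x (r x).

Definition series_one (R : idomainType) (G : zmodType) : G -> R :=
  fun y => if y == 0 then 1 else 0.

Definition series_unit (R : idomainType) (G : zmodType) (S : {pred R})
    (lt : rel G) (u : G -> R) : Prop :=
  is_series S lt u /\
  exists v, is_series S lt v /\ is_prod u v (@series_one R G).

Definition series_nonzero (R : idomainType) (G : zmodType) (f : G -> R) : Prop :=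
  exists x, f x != 0.

Definition is_monomial (R : idomainType) (G : zmodType) (S : {pred R})
    (p : G -> R) : Prop :=
  exists (s : R) (g : G), s \in S /\ forall y, p y = if y == g then s else 0.

Definition series_irreducible (R : idomainType) (G : zmodType) (S : {pred R})
    (lt : rel G) (f : G -> R) : Prop :=
  series_nonzero f /\ ~ series_unit S lt f /\
  forall p q, is_series S lt p -> is_series S lt q -> is_prod p q f ->
    series_unit S lt p \/ series_unit S lt q.

Definition monolithic (R : idomainType) (G : zmodType) (S : {pred R})
    (lt : rel G) (f : G -> R) : Prop :=
  series_nonzero f /\
  forall p q, is_series S lt p -> is_series S lt q -> is_prod p q f ->
    is_monomial S p \/ is_monomial S q.

Definition sdvd (R : idomainType) (S : {pred R}) (d a : R) : Prop :=
  exists e, e \in S /\ e != 0 /\ a = d * e.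

Definition sunit (R : idomainType) (S : {pred R}) (d : R) : Prop :=
  d \in S /\ d != 0 /\ exists e, e \in S /\ d * e = 1.

(* 1 is a gcd of the nonzero coefficients of f in S \ {0} *)
Definition one_in_gcd_coeffs (R : idomainType) (G : zmodType) (S : {pred R})
    (f : G -> R) : Prop :=
  forall d, d \in S -> d != 0 ->
    (forall x, f x != 0 -> sdvd S d (f x)) -> sunit S d.

(* Main.v *)
Require Import Defs.
From HB Require Import structures.
From mathcomp Require Import all_boot all_algebra.
Import GRing.Theory.
Local Open Scope ring_scope.

Lemma sumS (R : idomainType) (S : {pred R}) (S0 : 0 \in S)
  (SD : forall a b, a \in S -> b \in S -> a + b \in S)
  (Sred : forall a b, a \in S -> b \in S -> a + b = 0 -> a = 0)
  (T : eqType) (l : seq T) (F : T -> R) :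
  (forall a, F a \in S) ->
  (\sum_(a <- l) F a \in S) /\ (\sum_(a <- l) F a = 0 -> forall a, a \in l -> F a = 0).
Proof.
move=> HF; elim: l => [|b l [IHs IH0]]; first by rewrite big_nil.
rewrite big_cons; split; first exact: SD.
move=> H0 a; rewrite inE => /orP [/eqP ->|al]; first exact: Sred H0.
apply: IH0 => //.
have Hb := Sred _ _ (HF b) IHs H0.
by move: H0; rewrite Hb add0r.
Qed.

Lemma conv_mono_l (R : idomainType) (G : zmodType) (p q : G -> R) s g y w :
  (forall z, p z = if z == g then s else 0) -> conv_at p q y w -> w = s * q (y - g).
Proof.
move=> Hp [l [ul [Hl ->]]].
case gl: (g \in l).
- rewrite (bigD1_seq g) //= Hp eqxx big1 ?addr0 // => a /negbTE ha.
  by rewrite Hp ha mul0r.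
- rewrite big1_seq.
  + have: ~~ (p g * q (y - g) != 0) by apply/negP => /Hl; rewrite gl.
    by rewrite negbK Hp eqxx => /eqP ->.
  + move=> a /andP [_ al]; rewrite Hp; case: eqP => [E|_]; last by rewrite mul0r.
    by move: gl; rewrite -E al.
Qed.

Lemma conv_mono_r (R : idomainType) (G : zmodType) (p q : G -> R) s g y w :
  (forall z, q z = if z == g then s else 0) -> conv_at p q y w -> w = p (y - g) * s.
Proof.
move=> Hq [l [ul [Hl ->]]].
have E : y - (y - g) = g by rewrite opprB addrC subrK.
case gl: ((y - g) \in l).
- rewrite (bigD1_seq (y - g)) //= Hq E eqxx big1 ?addr0 // => a ha.
  rewrite Hq; case: eqP => [E'|_]; last by rewrite mulr0.
  by move: ha; rewrite -E' opprB addrC subrK eqxx.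
- rewrite big1_seq.
  + have: ~~ (p (y - g) * q (y - (y - g)) != 0) by apply/negP => /Hl; rewrite gl.
    by rewrite negbK E Hq eqxx => /eqP ->.
  + move=> a /andP [_ al]; rewrite Hq; case: eqP => [E'|_]; last by rewrite mulr0.
    by move: gl; rewrite -E' opprB addrC subrK al.
Qed.

Lemma conv_mono_l_ex (R : idomainType) (G : zmodType) (p q : G -> R) s g y :
  (forall z, p z = if z == g then s else 0) -> conv_at p q y (s * q (y - g)).
Proof.
move=> Hp; exists [:: g]; split => //; split.
  by move=> a; rewrite Hp inE; case: (a == g) => //; rewrite mul0r eqxx.
by rewrite big_seq1 Hp eqxx.
Qed.

Lemma mono_series (R : idomainType) (G : zmodType) (S : {pred R}) (lt : rel G)
  (S0 : 0 \in S) s g (t : G) :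
  s \in S -> t != 0 -> is_series S lt (fun y => if y == g then s else 0).
Proof.
move=> sS tn0; split; first by move=> x; case: (x == g).
exists (fun i => if i is 0%N then g else g + t); split.
  move=> i /=.
  have -> : (g + t == g) = false.
    apply/negP => /eqP H; move/eqP: tn0; apply.
    by rewrite -(addKr g t) H addNr.
  by rewrite eqxx.
move=> x; case: (eqVneq x g) => [->|ne] H; first by exists 0%N.
by rewrite eqxx in H.
Qed.

Lemma unit_mono (R : idomainType) (S : {pred R})
  (S0 : 0 \in S)
  (SD : forall a b, a \in S -> b \in S -> a + b \in S)
  (SM : forall a b, a \in S -> b \in S -> a * b \in S)
  (Sred : forall a b, a \in S -> b \in S -> a + b = 0 -> a = 0)
  (G : zmodType) (lt : rel G) (u : G -> R) :
  series_unit S lt u -> is_monomial S u.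
Proof.
move=> [[Su _] [v [[Sv _] Hp]]].
have Hterm : forall x a, u a * v (x - a) != 0 -> x = 0.
  move=> x a Hne. have [l [ul [Hl E]]] := Hp x. have al := Hl _ Hne.
  case: (eqVneq x 0) => // xn0. exfalso.
  move: E; rewrite /series_one (negbTE xn0) => E.
  have [_ H0] := sumS _ _ S0 SD Sred _ l _ (fun a => SM _ _ (Su a) (Sv (x - a))).
  by move: Hne; rewrite (H0 (esym E) a al) eqxx.
have [l [ul [Hl E]]] := Hp 0.
have : has (fun a => u a * v (0 - a) != 0) l.
  apply/negPn/negP => /hasPn H.
  move: E; rewrite big1_seq /series_one ?eqxx.
    by move/eqP; rewrite oner_eq0.
  by move=> a /andP [_ al]; apply/eqP; move: (H a al); rewrite negbK.
move=> /hasP [a0 _ Ha0].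
have vn0 : v (0 - a0) != 0 by move: Ha0; rewrite mulf_eq0 negb_or => /andP [].
have claim : forall a, u a != 0 -> a = a0.
  move=> a ua.
  have H : u a * v ((a + (0 - a0)) - a) != 0.
    by rewrite addrAC subrr add0r mulf_neq0.
  have := Hterm _ _ H. rewrite sub0r => /subr0_eq //.
exists (u a0), a0; split => // y; case: eqP => [->|ne] //.
by case: (eqVneq (u y) 0) => // /claim.
Qed.

Theorem lemma4p1 (R : idomainType) (S : {pred R})
  (S0 : 0 \in S) (S1 : 1 \in S)
  (SD : forall a b, a \in S -> b \in S -> a + b \in S)
  (SM : forall a b, a \in S -> b \in S -> a * b \in S)
  (Sred : forall a b, a \in S -> b \in S -> a + b = 0 -> a = 0)
  (G : zmodType) (lt : rel G)
  (lt_irr : forall a, ~~ lt a a)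
  (lt_trans : forall a b c, lt a b -> lt b c -> lt a c)
  (lt_total : forall a b, a != b -> lt a b || lt b a)
  (lt_add : forall a b c, lt a b -> lt (a + c) (b + c))
  (G_tf : forall (g : G) (n : nat), (0 < n)%N -> g *+ n = 0 -> g = 0)
  (f : G -> R) (Hf : is_series S lt f)
  (Hsupp : exists x y, x != y /\ f x != 0 /\ f y != 0) :
  series_irreducible S lt f <-> monolithic S lt f /\ one_in_gcd_coeffs S f.
Proof.
have [x1 [y1 [xy [fx1 fy1]]]] := Hsupp.
have tn0 : x1 - y1 != 0 by rewrite subr_eq0.
have UM := unit_mono _ _ S0 SD SM Sred G lt.
have notmono : forall h : G -> R, is_monomial S h ->
    (forall y, h y = 0 -> f y = 0) -> False.
  move=> h [s [g [_ Hh]]] Hfh.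
  have E : forall y, y != g -> f y = 0 by move=> y /negbTE yn; apply: Hfh; rewrite Hh yn.
  case: (eqVneq x1 g) => [ex|nx]; last by move/eqP: fx1; apply; apply: E.
  case: (eqVneq y1 g) => [ey|ny]; last by move/eqP: fy1; apply; apply: E.
  by move: xy; rewrite ex ey eqxx.
have [Sf [gf [Hgf1 Hgf2]]] := Hf.
split.
- move=> [fnz [fnu firr]]; split.
    split => // p q Hp Hq Hpq.
    by case: (firr p q Hp Hq Hpq) => /UM; auto.
  move=> d dS dn0 Hdiv.
  have Hdiv' : forall x, exists e, (e \in S) && (f x == d * e).
    move=> x; case: (eqVneq (f x) 0) => [->|fxn].
      by exists 0; rewrite S0 mulr0 eqxx.
    by have [e [eS [_ ->]]] := Hdiv x fxn; exists e; rewrite eS eqxx.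
  pose h x := xchoose (Hdiv' x).
  have hS : forall x, h x \in S by move=> x; case/andP: (xchooseP (Hdiv' x)).
  have fh : forall x, f x = d * h x by move=> x; case/andP: (xchooseP (Hdiv' x)) => _ /eqP.
  have hnz : forall x, (h x != 0) = (f x != 0) by move=> x; rewrite fh mulf_eq0 negb_or dn0.
  have Hh : is_series S lt h.
    split => //; exists gf; split.
      by move=> i; rewrite !hnz; apply: Hgf1.
    by move=> x; rewrite hnz; apply: Hgf2.
  pose dm := fun y : G => (if y == 0 then d else 0 : R).
  have Hdm : forall z : G, dm z = if z == 0 then d else 0 by [].
  have Hprod : is_prod dm h f.
    by move=> x; have := conv_mono_l_ex _ _ dm h d 0 x Hdm; rewrite subr0 -fh.
  case: (firr dm h (mono_series _ _ S lt S0 d 0 _ dS tn0) Hh Hprod) => Hu.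
  + have [_ [v [[Sv _] Hpv]]] := Hu.
    have := conv_mono_l _ _ _ _ _ _ _ _ Hdm (Hpv 0).
    rewrite /series_one eqxx => E.
    split => //; split => //; exists (v (0 - 0)); split => //.
  + exfalso; apply: (notmono h (UM h Hu)) => y hy0.
    by rewrite fh hy0 mulr0.
- move=> [[fnz Hmono] Hgcd]; split => //; split.
    by move=> /UM Hm; apply: (notmono f Hm).
  move=> p q Hp Hq Hpq.
  have [Sp _] := Hp.
  have [Sq _] := Hq.
  have [x0 fx0] := fnz.
  case: (Hmono p q Hp Hq Hpq) => [[s [g [sS Hps]]]|[s [g [sS Hqs]]]].
  + left.
    have Hf' : forall y, f y = s * q (y - g)
      by move=> y; apply: (conv_mono_l _ _ _ _ _ _ _ _ Hps (Hpq y)).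
    have sn0 : s != 0 by apply: contraNneq fx0 => s0; rewrite Hf' s0 mul0r.
    have [_ [_ [e [eS se1]]]] : sunit S s.
      apply: Hgcd => // x Hx; exists (q (x - g)); split; first exact: Sq; split => //.
      by move: Hx; rewrite Hf' mulf_eq0 negb_or => /andP [].
    split => //; exists (fun y => if y == -g then e else 0); split.
      exact: mono_series _ _ S lt S0 e (-g) _ eS tn0.
    move=> x.
    have -> : series_one R x = s * (if x - g == -g then e else 0).
      rewrite /series_one -[x - g == -g]subr_eq0 opprK subrK.
      by case: (x == 0); rewrite ?se1 ?mulr0.
    exact: conv_mono_l_ex.
  + right.
    have Hf' : forall y, f y = p (y - g) * s
      by move=> y; apply: (conv_mono_r _ _ _ _ _ _ _ _ Hqs (Hpq y)).
    have sn0 : s != 0 by apply: contraNneq fx0 => s0; rewrite Hf' s0 mulr0.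
    have [_ [_ [e [eS se1]]]] : sunit S s.
      apply: Hgcd => // x Hx; exists (p (x - g)); split; first exact: Sp; split => //.
        by move: Hx; rewrite Hf' mulf_eq0 negb_or => /andP [].
      by rewrite Hf' mulrC.
    split => //; exists (fun y => if y == -g then e else 0); split.
      exact: mono_series _ _ S lt S0 e (-g) _ eS tn0.
    move=> x.
    have -> : series_one R x = s * (if x - g == -g then e else 0).
      rewrite /series_one -[x - g == -g]subr_eq0 opprK subrK.
      by case: (x == 0); rewrite ?se1 ?mulr0.
    exact: conv_mono_l_ex.
Qed.
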